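(* With the parameter choices specified below, the DI-VKECM scheme described below satisfies the completeness property when all parties and devices behave honestly: for every message $m\in\{0,1\}^\lambda$, \[ \Pr\left[\left(F = \text{accept}\right)\land\left(\mathsf{Dec}\circ\mathsf{KeyRel}\circ\mathsf{Enc}(1^\lambda, m) = m\right)\right] \geq 1-\left(e^{-\delta_{\gamma,\alpha}^2 \lambda/8} + p_\mathrm{err}(\lambda)\right), \] where $p_\mathrm{err}$ is the failure-probability function of the error-correction procedure described below.
   Context: Security parameter $\lambda$; device input/output length $l=\lambda$; message space $\mathcal{M}=\{0,1\}^\lambda$. $\omega^*(\mathrm{CHSH})=\frac12(1+\frac1{\sqrt2})$ is the quantum value of the CHSH game. Honest devices (with depolarizing noise $q\in[0,1/2]$): client and receiver share $l$ i.i.d. copies of the Werner state $\rho_q=(1-2q)|\Phi^+\rangle\langle\Phi^+| + 2q\,\mathbb{1}/4$, $|\Phi^+\rangle=\frac{1}{\sqrt2}(|00\rangle+|11\rangle)$. On the $i$-th copy the client's device, on input $x_i\in\{0,1\}$, performs Alice's ideal CHSH measurement (computational basis for $x_i=0$, basis $\{|\pi/4\rangle,|-\pi/4\rangle\}$ for $x_i=1$, with $|\theta\rangle=\cos\theta|0\rangle+\sin\theta|1\rangle$). The receiver's device on input $y_i\in\{0,1\}$ performs Bob's ideal CHSH measurement ($\{|\pi/8\rangle,|-3\pi/8\rangle\}$ for 0, $\{|3\pi/8\rangle,|-\pi/8\rangle\}$ for 1), on $y_i\in\{2,3\}$ performs Alice's ideal measurement for input $y_i-2$, and on $y_i=\perp$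 outputs 0 without measuring; the receiver's device can be given inputs twice (once in encryption, once in decryption). Error correction: if Alice and Bob hold $l$ i.i.d. samples of $(C_i,C'_i)$, then for any $\xi>1$, $\beta<1/2$ there is an efficient procedure where Alice sends a syndrome of length $\xi\,\mathsf{H}(C_i|C'_i)\,l$ and Bob's guess of $C$ is wrong with probability at most $p_\mathrm{err}(l)=O(2^{-l^\beta})$. It is applied with $(C_i,C'_i)=(\tilde A_i,(\tilde S_i,U_i,\tilde X_i))$ for the honest devices, giving syndrome length $\ell_{\mathrm{syn}}=\xi(1-\gamma)(1-\alpha)h_2(q)\,l$ ($h_2$ = binary entropy). Scheme. $\mathsf{Enc}(1^\lambda,m)$: client samples $X\in\{0,1\}^l$ uniformly and independently $U_i\in\{\mathrm{keep},0,1\}$ with probabilities $1-\gamma,\gamma/2,\gamma/2$; client inputs $X$ into its device, gets $A$; sends $U$ to the receiver, who inputs $U$ (keep read as $\perp$), gets $S$ and sends $S$ back. Test: the number of $i$ with $U_i\ne\mathrm{keep}$ and $A_i\oplus S_i\ne X_i\cdot U_i$ is at most $(\gamma(1-\omega^*(\mathrm{CHSH}))+\delta_{\gamma,\alpha}/2)l$. If it passes, $F=$ accept, client samples uniform $R\in\mathcal{M}$ and sends $C=m\oplus R$; otherwise $F=$ reject and client sends a uniform dummy $C$. Private key $(X,U,A,R)$. $\mathsf{KeyRel}$: sample $\tilde X_i=\perp$ with probability $\alpha$, else $\tilde X_i=X_i+2$; set $\tilde A_i=0$ if $U_i\neq\mathrm{keep}$ or $\tilde X_i=\perp$, else $\tilde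 A_i=A_i$; compute syndrome $\mathrm{syn}(\tilde A)$; release $(R\oplus\tilde A,\mathrm{syn}(\tilde A),\tilde X)$. $\mathsf{Dec}$: input $\tilde X$ into the receiver's device, get $S'$; set $\tilde S_i=0$ if $U_i\ne\mathrm{keep}$ or $\tilde X_i=\perp$, else $\tilde S_i=S'_i$; use $\tilde S,U,\tilde X,\mathrm{syn}(\tilde A)$ to guess $\hat A$; output $C\oplus(R\oplus\tilde A)\oplus\hat A$. Parameters: $\xi>1$, $\gamma,\alpha\in(0,1)$; $\delta_{\gamma,\alpha}>0$ is a constant such that the anchored two-round cloning game $\mathrm{CLONE}_{\gamma,\alpha}$ has quantum value at most $(1-\gamma)+\gamma\omega^*(\mathrm{CHSH})-\delta_{\gamma,\alpha}$; $\kappa>0$ is the constant from the parallel repetition bound for that game; and the honest noise satisfies $q<\delta_{\gamma,\alpha}/4$ and $2\xi(1-\gamma)(1-\alpha)h_2(q)<\kappa\delta_{\gamma,\alpha}^3\alpha^4$. *)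

(* Defs.v *)
From HB Require Import structures.
From mathcomp Require Import all_boot all_order all_algebra.
From mathcomp Require Import all_classical all_reals all_analysis.
Set Implicit Arguments. Unset Strict Implicit. Unset Printing Implicit Defensive.
Import Order.TTheory GRing.Theory Num.Theory.
Local Open Scope ring_scope.

Section DIVKECM.
Variable R : realType.

Definition kron m1 n1 m2 n2 (A : 'M[R]_(m1.+1, n1.+1)) (B : 'M[R]_(m2.+1, n2.+1))
  : 'M[R]_(m1.+1 * m2.+1, n1.+1 * n2.+1) :=
  \matrix_(i, j) (A (inord (i %/ m2.+1)) (inord (j %/ n2.+1))
                  * B (inord (i %% m2.+1)) (inord (j %% n2.+1))).

Definition ket (th : R) : 'cV[R]_2 :=
  \col_(i < 2) (if i == ord0 then cos th else sin th).

Definition proj (th : R) : 'M[R]_2 := ket th *m (ket th)^T.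

Definition e0 : 'cV[R]_2 := \col_(i < 2) (i == ord0)%:R.
Definition e1 : 'cV[R]_2 := \col_(i < 2) (i != ord0)%:R.

Definition phiplus : 'cV[R]_(2 * 2) :=
  (Num.sqrt 2)^-1 *: (kron e0 e0 + kron e1 e1).

Definition werner (q : R) : 'M[R]_(2 * 2) :=
  (1 - 2 * q) *: (phiplus *m phiplus^T) + (2 * q / 4) *: 1%:M.

Definition born (rho : 'M[R]_(2 * 2)) (A B : 'M[R]_2) : R := \tr (rho *m kron A B).

Definition alice_angle (x a : bool) : R :=
  match x, a with
  | false, false => 0
  | false, true => pi / 2
  | true, false => pi / 4
  | true, true => - (pi / 4)
  end.
Definition aliceP (x a : bool) : 'M[R]_2 := proj (alice_angle x a).

(* Outcome labels are those making the
   strategy the optimal CHSH strategy -- winning with prob. omega-star: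
   for y = 1 outcome 0 is |-pi/8> and outcome 1 is |3pi/8>. *)
Definition bob_angle (y b : bool) : R :=
  match y, b with
  | false, false => pi / 8
  | false, true => - (3 * pi / 8)
  | true, false => - (pi / 8)
  | true, true => 3 * pi / 8
  end.
Definition bobP (y b : bool) : 'M[R]_2 := proj (bob_angle y b).

(* inputs of the receiver's device: y in {0,1} (Bob), y in {2,3} (Alice y-2), bot *)
Inductive recv_in := RBob of bool | RAlice of bool | RBot.

(* effect (projector) of outcome b of the receiver's device on input y;
   on bot the device outputs 0 without measuring (effects 1 and 0) *)
Definition recvP (y : recv_in) (b : bool) : 'M[R]_2 :=
  match y with
  | RBob y' => bobP y' b
  | RAlice x => aliceP x b
  | RBot => if b then 0 else 1%:M
  end.

(* U_i in {keep,0,1} is encoded as option bool (None = keep);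
   Xtil_i in {bot,2,3} is encoded as option bool (None = bot, Some x = x+2). *)

Definition enc_in (u : option bool) : recv_in :=
  if u is Some y then RBob y else RBot.              (* keep is read as bot *)
Definition dec_in (xt : option bool) : recv_in :=
  if xt is Some x then RAlice x else RBot.

Definition xtil1 (x bt : bool) : option bool := if bt then None else Some x.

Variables (gamma alpha q : R).

Definition pU (u : option bool) : R :=
  if u is Some _ then gamma / 2 else 1 - gamma.
Definition pBot (bt : bool) : R := if bt then alpha else 1 - alpha.

(* joint probability, for one copy, of: X_i = x, U_i = u, [Xtil_i = bot] = bt,
   client output A_i = a, receiver outputs S_i = s (encryption) and
   S'_i = s' (decryption).  The receiver's two uses of its half of the copy are
   sequential projective (Lueders) measurements. *)
Definition pround (x : bool) (u : option bool) (bt a s s' : bool) : R :=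
  (1 / 2) * pU u * pBot bt *
  born (werner q) (aliceP x a)
    (recvP (enc_in u) s *m recvP (dec_in (xtil1 x bt)) s' *m recvP (enc_in u) s).

Definition atil1 (u : option bool) (bt a : bool) : bool :=
  if (u != None) || bt then false else a.

(* marginal distribution of (C_i, C'_i) = (Atil_i, (Stil_i, U_i, Xtil_i)) *)
Definition pCC (c : bool * (bool * option bool * option bool)) : R :=
  \sum_(x : bool) \sum_(u : option bool) \sum_(bt : bool) \sum_(a : bool)
   \sum_(s : bool) \sum_(s' : bool)
     pround x u bt a s s' *
     ((atil1 u bt a, (atil1 u bt s', u, xtil1 x bt)) == c)%:R.

Variable l : nat.
Variables (delta : R).

Definition omega_chsh : R := (1 + (Num.sqrt 2)^-1) / 2.

Definition bits := {ffun 'I_l -> bool}.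

Definition xor_bits (m1 m2 : bits) : bits := [ffun i => m1 i (+) m2 i].

Definition nfail (x : bits) (u : {ffun 'I_l -> option bool}) (a s : bits) : nat :=
  #|[set i : 'I_l | if u i is Some y then (a i (+) s i) != (x i && y) else false]|.

Definition accepts (x : bits) (u : {ffun 'I_l -> option bool}) (a s : bits) : bool :=
  (nfail x u a s)%:R <= (gamma * (1 - omega_chsh) + delta / 2) * l%:R.

Variables (Syn : Type) (syn : bits -> Syn)
          (guess : {ffun 'I_l -> bool * option bool * option bool} -> Syn -> bits).

(* error probability of the error-correction procedure on l i.i.d. samples of
   (C_i, C'_i) distributed according to pCC *)
Definition ec_error : R :=
  \sum_(cc : {ffun 'I_l -> bool * (bool * option bool * option bool)})
    (\prod_(i < l) pCC (cc i)) *
    (guess [ffun i => (cc i).2] (syn [ffun i => (cc i).1]) != [ffun i => (cc i).1])%:R.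

(* Enc, KeyRel, Dec run on the sampled randomness; returns (F = accept, output) *)
Definition run (m : bits) (x : bits) (u : {ffun 'I_l -> option bool}) (bt a s s' : bits)
  (r cd : bits) : bool * bits :=
  let F := accepts x u a s in
  let C := if F then xor_bits m r else cd in            (* Enc *)
  let Xt := [ffun i => xtil1 (x i) (bt i)] in           (* KeyRel *)
  let At := [ffun i => atil1 (u i) (bt i) (a i)] in
  let key := xor_bits r At in
  let sy := syn At in
  let St := [ffun i => atil1 (u i) (bt i) (s' i)] in     (* Dec *)
  let Ahat := guess [ffun i => (St i, u i, Xt i)] sy in
  (F, xor_bits (xor_bits C key) Ahat).

Definition success_prob (m : bits) : R :=
  \sum_(x : bits) \sum_(u : {ffun 'I_l -> option bool}) \sum_(bt : bits)
  \sum_(a : bits) \sum_(s : bits) \sum_(s' : bits) \sum_(r : bits) \sum_(cd : bits)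
    (\prod_(i < l) pround (x i) (u i) (bt i) (a i) (s i) (s' i))
    * (2 ^+ l)^-1 * (2 ^+ l)^-1
    * (let o := run m x u bt a s s' r cd in o.1 && (o.2 == m))%:R.

End DIVKECM.

Definition h2 (R : realType) (p : R) : R :=
  - (p * ln p + (1 - p) * ln (1 - p)) / ln 2.

(* Main.v *)
From Pilot Require Import Defs.
From HB Require Import structures.
From mathcomp Require Import all_boot all_order all_algebra.
From mathcomp Require Import all_classical all_reals all_analysis.
From mathcomp Require Import ring lra.
Import Order.TTheory GRing.Theory Num.Theory.
Local Open Scope ring_scope.
Section Hoeff.
Variable R : realType.
Variable p : R.
Hypothesis p0 : 0 <= p.
Hypothesis p1 : p <= 1.

Let D (z : R) := 1 - p + p * expR z.

Lemma D_gt0 z : 0 < D z.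
Proof.
rewrite /D; have e0 := expR_gt0 z.
have [pl1|] := ltP p 1; first by have := mulr_ge0 p0 (ltW e0); lra.
move=> pg1; have -> : p = 1 by apply/le_anti; rewrite p1 pg1.
by rewrite subrr add0r mul1r.
Qed.

Lemma dD (y : R) : is_derive y 1 (fun z => 1 - p + p * expR z) (p * expR y).
Proof. by apply: trigger_derive; rewrite /GRing.scale /= add0r mul1r. Qed.

Lemma dF (y : R) : is_derive y 1 (fun z => p + z * 4^-1 - p * expR z * (1 - p + p * expR z)^-1)
  ((p * expR y / D y - 2^-1) ^+ 2).
Proof.
have Dn : 1 - p + p * expR y != 0 by have := D_gt0 y; rewrite /D => /gt_eqF ->.
have dV := @is_deriveV R (fun z => 1 - p + p * expR z) y (p * expR y) 1 Dn (dD y).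
apply: trigger_derive; rewrite /GRing.scale /= /D.
by field.
Qed.

Lemma step1 x : 0 <= x -> p * expR x / D x <= p + x / 4.
Proof.
move=> x0.
set f := fun z => p + z * 4^-1 - p * expR z * (1 - p + p * expR z)^-1.
have df z : derivable f z 1 by have [] := dF z.
have h : f 0 <= f x.
  apply: (@ger0_derive1_ndecr R f 0 x) => //.
  - move=> z _; rewrite derive1E; have [_ ->] := dF z; exact: sqr_ge0.
  - by apply: derivable_within_continuous => z _; exact: df.
have H : f 0 = 0 by rewrite /f expR0 mul0r addr0 !mulr1 subrK invr1 mulr1 subrr.
move: h; rewrite H /f -/(D x) => h; lra.
Qed.

Lemma hoeffding x : 0 <= x -> 1 - p + p * expR x <= expR (p * x + x ^+ 2 / 8).
Proof.
move=> x0.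
set g := fun z : R => - (p * z + z ^+ 2 / 8).
have dg (y : R) : is_derive y 1 g (- (p + y / 4)).
  by apply: trigger_derive; rewrite /GRing.scale /=; field.
set G := fun z => (1 - p + p * expR z) * expR (g z).
have dG (y : R) : is_derive y 1 G (expR (g y) * (p * expR y - (p + y / 4) * D y)).
  have dE := @is_derive1_comp R expR g y _ _ (is_derive_expR (g y)) (dg y).
  have dD' := dD y.
  rewrite /G; apply: trigger_derive; rewrite /GRing.scale /= /D; ring.
have dfG z : derivable G z 1 by have [] := dG z.
have h : G x <= G 0.
  apply: (@ler0_derive1_nincr R G 0 x) => //.
  - move=> z; rewrite in_itv /= => /andP[z0 _]; rewrite derive1E; have [_ ->] := dG z.
    rewrite pmulr_rle0 ?expR_gt0 // subr_le0.
    by have := step1 z (ltW z0); rewrite ler_pdivrMr ?D_gt0 // mulrC.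
  - by apply: derivable_within_continuous => z _; exact: dfG.
move: h; rewrite /G /g /= !(mulr0, expr0n, add0r, oppr0, expR0, mulr1, subrK, mul0r, expRN) => h.
have e := expR_gt0 (p * x + x ^+ 2 / 8).
by move: h; rewrite divr1 ler_pdivrMr // mul1r.
Qed.
End Hoeff.

Section Q.
Variable R : realType.
Local Notation projm := (@Pilot.Defs.proj R).
Lemma sum4 (F : 'I_(2*2) -> R) : \sum_i F i = F (inord 0) + F (inord 1) + F (inord 2) + F (inord 3).
Proof.
rewrite !big_ord_recl big_ord0 addr0 !addrA.
by congr (_ + _ + _ + _); congr F; apply/val_inj; rewrite /= inordK.
Qed.
Lemma sum2 (F : 'I_2 -> R) : \sum_i F i = F (inord 0) + F (inord 1).
Proof.
rewrite !big_ord_recl big_ord0 addr0.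
by congr (_ + _); congr F; apply/val_inj; rewrite /= inordK.
Qed.
Lemma sum1 (F : 'I_1 -> R) : \sum_i F i = F 0.
Proof. by rewrite big_ord1. Qed.

Lemma inE4 (k : nat) : (k < 4)%N -> nat_of_ord (inord k : 'I_(2*2)) = k.
Proof. by move=> h; rewrite inordK. Qed.
Lemma inE2 (k : nat) : (k < 2)%N -> nat_of_ord (inord k : 'I_2) = k.
Proof. by move=> h; rewrite inordK. Qed.
Lemma eqord n (i j : 'I_n) : (i == j) = (nat_of_ord i == nat_of_ord j).
Proof. by []. Qed.

Lemma si (x y : R) : (Num.sqrt 2)^-1 * x * ((Num.sqrt 2)^-1 * y) = x * y / 2.
Proof.
have h : Num.sqrt (2:R) ^+ 2 = 2 by rewrite sqr_sqrtr // ler0n.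
have hn : Num.sqrt (2:R) != 0 by rewrite sqrtr_eq0 -ltNge ltr0n.
rewrite mulrACA -invfM -expr2 h; ring.
Qed.

Lemma ring_aux (q a00 a01 a10 a11 b00 b01 b10 b11 : R) :
  ((1 - 2 * q) / 2 + 2 * q / 4) * (a00 * b00) + (1 - 2 * q) / 2 * (a10 * b10) +
  2 * q / 4 * (a00 * b11) + 2 * q / 4 * (a11 * b00) +
  ((1 - 2 * q) / 2 * (a01 * b01) +
   ((1 - 2 * q) / 2 + 2 * q / 4) * (a11 * b11)) =
  (1 - 2 * q) / 2 * (a00 * b00 + a01 * b01 + (a10 * b10 + a11 * b11)) +
  q / 2 * ((a00 + a11) * (b00 + b11)).
Proof. by field. Qed.

Lemma born_formula (q : R) (A B : 'M[R]_2) :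
  born (werner q) A B = (1 - 2 * q) / 2 * (\sum_i \sum_j A i j * B i j)
     + q / 2 * (\tr A * \tr B).
Proof.
rewrite /born /werner /kron /phiplus /e0 /e1 /mxtrace.
rewrite !sum2 !sum4 !mxE !sum4 !mxE !sum1 !mxE.
rewrite ?eqord ?inE4 ?inE2 //= !si.
have d0 : (0 %/ 2 = 0)%N by []. have d1 : (1 %/ 2 = 0)%N by [].
have d2 : (2 %/ 2 = 1)%N by []. have d3 : (3 %/ 2 = 1)%N by [].
have m0 : (0 %% 2 = 0)%N by []. have m1 : (1 %% 2 = 1)%N by [].
have m2 : (2 %% 2 = 0)%N by []. have m3 : (3 %% 2 = 1)%N by [].
rewrite d0 d1 d2 d3 m0 m1 m2 m3.
rewrite ?(mul0r, mulr0, mul1r, mulr1, addr0, add0r).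
set a00 := A (inord 0) (inord 0). set a01 := A (inord 0) (inord 1). set a10 := A (inord 1) (inord 0). set a11 := A (inord 1) (inord 1).
set b00 := B (inord 0) (inord 0). set b01 := B (inord 0) (inord 1). set b10 := B (inord 1) (inord 0). set b11 := B (inord 1) (inord 1).
exact: ring_aux.
Qed.

Definition kc (th : R) (i : 'I_2) : R := if i == ord0 then cos th else sin th.
Lemma projE th i j : projm th i j = kc th i * kc th j.
Proof. by rewrite /Defs.proj !mxE sum1 !mxE /kc. Qed.
Lemma kc0 th : kc th (inord 0) = cos th.
Proof. by rewrite /kc eqord inE2. Qed.
Lemma kc1 th : kc th (inord 1) = sin th.
Proof. by rewrite /kc eqord inE2. Qed.

Definition S (A B : 'M[R]_2) := \sum_i \sum_j A i j * B i j.
Definition Fq (q : R) (A B : 'M[R]_2) := (1 - 2 * q) / 2 * S A B + q / 2 * (\tr A * \tr B).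

Lemma bornE q A B : born (werner q) A B = Fq q A B.
Proof. by rewrite born_formula. Qed.

Lemma ord2 (i : 'I_2) : i = inord 0 \/ i = inord 1.
Proof.
case: i => [[|[|//]] Hi]; [left|right]; apply/val_inj; by rewrite /= inordK.
Qed.

Lemma mx2P (A B : 'M[R]_2) :
  A (inord 0) (inord 0) = B (inord 0) (inord 0) ->
  A (inord 0) (inord 1) = B (inord 0) (inord 1) ->
  A (inord 1) (inord 0) = B (inord 1) (inord 0) ->
  A (inord 1) (inord 1) = B (inord 1) (inord 1) -> A = B.
Proof.
move=> h00 h01 h10 h11; apply/matrixP => i j.
by case: (ord2 i) => ->; case: (ord2 j) => ->.
Qed.

Lemma mulmxE2 (A B : 'M[R]_2) i j : (A *m B) i j = A i (inord 0) * B (inord 0) j + A i (inord 1) * B (inord 1) j.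
Proof. by rewrite mxE sum2. Qed.
Lemma scaleE (c : R) (A : 'M[R]_2) i j : (c *: A) i j = c * A i j.
Proof. by rewrite mxE. Qed.
Lemma addE (A B : 'M[R]_2) i j : (A + B) i j = A i j + B i j.
Proof. by rewrite mxE. Qed.

Lemma pp_mul a b : projm a *m projm b *m projm a = (cos (a - b))^+2 *: projm a.
Proof.
apply/matrixP => i j; rewrite !mulmxE2 scaleE !projE !kc0 !kc1 cosB.
ring.
Qed.

Lemma pp_id a : projm a *m projm a = projm a.
Proof.
apply/matrixP => i j; rewrite !mulmxE2 !projE !kc0 !kc1.
have h := cos2Dsin2 a.
transitivity (kc a i * kc a j * (cos a ^+ 2 + sin a ^+ 2)); first by ring.
by rewrite h mulr1.
Qed.

Lemma S_proj a b : S (projm a) (projm b) = cos (a - b) ^+ 2.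
Proof. rewrite /S !sum2 !projE !kc0 !kc1 cosB; ring. Qed.

Lemma tr_proj a : \tr (projm a) = 1.
Proof. by rewrite /mxtrace sum2 !projE !kc0 !kc1 -!expr2 cos2Dsin2. Qed.

Lemma S_1 A : S A 1%:M = \tr A.
Proof.
rewrite /S /mxtrace !sum2 !mxE !eqord !inE2 //=.
by rewrite !mulr1 !mulr0 !addr0 add0r.
Qed.

Lemma tr_1 : \tr (1%:M : 'M[R]_2) = 2.
Proof. by rewrite mxtrace1. Qed.

Lemma SZ A B c : S A (c *: B) = c * S A B.
Proof.
rewrite /S mulr_sumr; apply: eq_bigr => i _; rewrite mulr_sumr; apply: eq_bigr => j _.
by rewrite !mxE mulrCA.
Qed.
Lemma SDr A B1 B2 : S A (B1 + B2) = S A B1 + S A B2.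
Proof.
rewrite /S -big_split; apply: eq_bigr => i _; rewrite -big_split; apply: eq_bigr => j _.
by rewrite !mxE mulrDr.
Qed.
Lemma SDl A1 A2 B : S (A1 + A2) B = S A1 B + S A2 B.
Proof.
rewrite /S -big_split; apply: eq_bigr => i _; rewrite -big_split; apply: eq_bigr => j _.
by rewrite !mxE mulrDl.
Qed.
Lemma S0 A : S A 0 = 0.
Proof. by rewrite /S big1 // => i _; rewrite big1 // => j _; rewrite mxE mulr0. Qed.

Lemma FqDr q A B1 B2 : Fq q A (B1 + B2) = Fq q A B1 + Fq q A B2.
Proof. rewrite /Fq SDr mxtraceD; ring. Qed.
Lemma FqDl q A1 A2 B : Fq q (A1 + A2) B = Fq q A1 B + Fq q A2 B.
Proof. rewrite /Fq SDl mxtraceD; ring. Qed.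
Lemma FqZr q A B c : Fq q A (c *: B) = c * Fq q A B.
Proof. rewrite /Fq SZ mxtraceZ; ring. Qed.

Lemma Fq11 q : Fq q 1%:M 1%:M = 1.
Proof. rewrite /Fq S_1 tr_1; by field. Qed.

Lemma Fq_proj q a b : Fq q (projm a) (projm b) = (1 - 2 * q) / 2 * cos (a - b) ^+ 2 + q / 2.
Proof. rewrite /Fq S_proj !tr_proj; ring. Qed.

Lemma proj_sum th ph :
  cos ph ^+ 2 = sin th ^+ 2 -> sin ph ^+ 2 = cos th ^+ 2 ->
  cos ph * sin ph = - (cos th * sin th) -> projm th + projm ph = 1%:M.
Proof.
move=> h1 h2 h3; have h := cos2Dsin2 th.
apply: mx2P; rewrite !addE !projE !mxE ?kc0 ?kc1 ?eqord ?inE2 //=.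
- by rewrite -!expr2 h1.
- by rewrite h3 addrN.
- by rewrite mulrC [sin ph * _]mulrC h3 addrN.
- by rewrite -!expr2 h2 addrC.
Qed.

Lemma proj_sumD th : projm th + projm (th + pi / 2) = 1%:M.
Proof.
apply: proj_sum; rewrite ?cosDpihalf ?sinDpihalf ?sqrrN //.
by rewrite mulNr mulrC.
Qed.

Lemma proj_sumB th : projm th + projm (th - pi / 2) = 1%:M.
Proof.
apply: proj_sum; rewrite ?cosBpihalf ?sinBpihalf ?sqrrN //.
by rewrite mulrN mulrC.
Qed.

Lemma alice_sum x : aliceP R x true + aliceP R x false = 1%:M.
Proof.
rewrite /aliceP addrC; case: x => /=.
- have -> : - (pi / 4) = pi / 4 - pi / 2 :> R by field.
  exact: proj_sumB.
- have -> : pi / 2 = 0 + pi / 2 :> R by rewrite add0r.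
  exact: proj_sumD.
Qed.

Lemma bob_sum y : bobP R y true + bobP R y false = 1%:M.
Proof.
rewrite /bobP addrC; case: y => /=.
- have -> : 3 * pi / 8 = - (pi / 8) + pi / 2 :> R by field.
  exact: proj_sumD.
- have -> : - (3 * pi / 8) = pi / 8 - pi / 2 :> R by field.
  exact: proj_sumB.
Qed.

Lemma recv_sum y : recvP R y true + recvP R y false = 1%:M.
Proof.
case: y => [y|x|] /=; [exact: bob_sum | exact: alice_sum | by rewrite add0r].
Qed.

Lemma recv_idem y b : recvP R y b *m recvP R y b = recvP R y b.
Proof.
case: y => [y|x|] /=; [exact: pp_id | exact: pp_id |].
by case: b; rewrite ?mul0mx ?mul1mx.
Qed.


Lemma sum_opt (F : option bool -> R) : \sum_(u : option bool) F u = F None + F (Some true) + F (Some false).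
Proof. by rewrite /index_enum !unlock /= -enumT enumT unlock /= addr0 addrA. Qed.

Lemma cos_pi4 : cos (pi / 4) = (Num.sqrt 2)^-1 :> R.
Proof.
have h : cos (pi / 4) ^+ 2 *+ 2 - 1 = 0 :> R.
  by rewrite -cos_mulr2n -cos_pihalf; congr cos; rewrite mulr2n; field; done.
have c0 : 0 <= cos (pi / 4) :> R.
  apply: cos_ge0_pihalf; have := @pi_gt0 R; lra.
have s2 : Num.sqrt (2:R) ^+ 2 = 2 by rewrite sqr_sqrtr // ler0n.
have sp : 0 < Num.sqrt (2:R) by rewrite sqrtr_gt0 ltr0n.
set c := cos (pi / 4) in h c0 *; set r := Num.sqrt 2 in s2 sp *.
have e : (c * r) ^+ 2 = 1 by rewrite exprMn s2; move: h; rewrite mulr2n; lra.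
have cr : c * r = 1.
  have : (c * r - 1) * (c * r + 1) = 0 by rewrite -subr_sqr e expr1n subrr.
  move/eqP; rewrite mulf_eq0 => /orP[]; first by rewrite subr_eq0 => /eqP.
  by have := mulr_ge0 c0 (ltW sp); lra.
by rewrite -[r^-1]mul1r -cr mulrK // unitfE gt_eqF.
Qed.

Lemma sin_pi8 : sin (pi / 8) ^+ 2 = 1 - omega_chsh R.
Proof.
have h := cos_mulr2n (pi / 8 : R).
have e : (pi / 8 : R) *+ 2 = pi / 4 by rewrite mulr2n; field; done.
rewrite e cos_pi4 mulr2n in h.
rewrite /omega_chsh sin2cos2; lra.
Qed.

Lemma cos_a d : d = pi / 2 - pi / 8 -> cos d ^+ 2 = sin (pi / 8) ^+ 2 :> R.
Proof. by move=> ->; rewrite cosB cos_pihalf sin_pihalf mul0r add0r mul1r. Qed.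
Lemma cos_b d : d = - (pi / 2 - pi / 8) -> cos d ^+ 2 = sin (pi / 8) ^+ 2 :> R.
Proof. by move=> ->; rewrite cosN; exact: cos_a. Qed.
Lemma cos_c d : d = pi / 2 + pi / 8 -> cos d ^+ 2 = sin (pi / 8) ^+ 2 :> R.
Proof. by move=> ->; rewrite cosD cos_pihalf sin_pihalf mul0r add0r mul1r sqrrN. Qed.
Lemma cos_d d : d = - (pi / 2 + pi / 8) -> cos d ^+ 2 = sin (pi / 8) ^+ 2 :> R.
Proof. by move=> ->; rewrite cosN; exact: cos_c. Qed.

Definition failp (x : bool) (u : option bool) (a s : bool) : bool :=
  if u is Some y then (a (+) s) != (x && y) else false.

Lemma fail_val q x y a s : failp x (Some y) a s ->
  Fq q (aliceP R x a) (bobP R y s) = (1 - 2 * q) / 2 * sin (pi / 8) ^+ 2 + q / 2.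
Proof.
rewrite /aliceP /bobP Fq_proj => hf; congr (_ * _ + _).
by case: x y a s hf => [] [] [] [] //= _;
  first [apply: cos_a; field | apply: cos_b; field | apply: cos_c; field | apply: cos_d; field].
Qed.

Section Round.
Variables (gamma alpha q : R).
Hypotheses (Hg : 0 <= gamma <= 1) (Ha : 0 <= alpha <= 1) (Hq : 0 <= q <= 1 / 2).

Lemma proundE x u bt a s s' : pround gamma alpha q x u bt a s s' =
  1 / 2 * pU gamma u * pBot alpha bt * Fq q (aliceP R x a)
    (recvP R (enc_in u) s *m recvP R (dec_in (xtil1 x bt)) s' *m recvP R (enc_in u) s).
Proof. by rewrite /pround bornE. Qed.

Lemma sum_s' x u bt a s : \sum_(s' : bool) pround gamma alpha q x u bt a s s' =
  1 / 2 * pU gamma u * pBot alpha bt * Fq q (aliceP R x a) (recvP R (enc_in u) s).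
Proof.
rewrite big_bool /= !proundE -mulrDr -FqDr -mulmxDl -mulmxDr recv_sum mulmx1 recv_idem.
by [].
Qed.

Lemma sum_pU : \sum_(u : option bool) pU gamma u = 1.
Proof. rewrite sum_opt /=; field; done. Qed.
Lemma sum_pBot : \sum_(bt : bool) pBot alpha bt = 1.
Proof. rewrite big_bool /=; ring. Qed.

Lemma total_round : \sum_(x : bool) \sum_(u : option bool) \sum_(bt : bool) \sum_(a : bool)
  \sum_(s : bool) \sum_(s' : bool) pround gamma alpha q x u bt a s s' = 1.
Proof.
have e1 x u bt a : \sum_(s : bool) \sum_(s' : bool) pround gamma alpha q x u bt a s s' =
   1 / 2 * pU gamma u * pBot alpha bt * Fq q (aliceP R x a) 1%:M.
  by rewrite big_bool /= !sum_s' -mulrDr -FqDr recv_sum.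
have e2 x u bt : \sum_(a : bool) \sum_(s : bool) \sum_(s' : bool) pround gamma alpha q x u bt a s s' =
   1 / 2 * pU gamma u * pBot alpha bt.
  by rewrite big_bool /= !e1 -mulrDr -FqDl alice_sum Fq11 mulr1.
under eq_bigr do under eq_bigr do under eq_bigr do rewrite e2.
under eq_bigr do under eq_bigr do rewrite -mulr_sumr sum_pBot mulr1.
under eq_bigr do rewrite -mulr_sumr sum_pU mulr1.
by rewrite big_bool /=; field; done.
Qed.


Definition nice (B : 'M[R]_2) :=
  (exists c th, 0 <= c /\ B = c *: projm th) \/ (exists c, 0 <= c /\ B = c *: 1%:M).

Lemma recv_cases y b :
  (exists th, recvP R y b = projm th) \/ recvP R y b = 1%:M \/ recvP R y b = 0.
Proof.
case: y => [y|x|] /=; [by left; eexists | by left; eexists |].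
by case: b; right; [right|left].
Qed.

Lemma nice_PMP y y' b b' : nice (recvP R y b *m recvP R y' b' *m recvP R y b).
Proof.
case: (recv_cases y b) => [[th ->]|[->|->]]; last first.
- by right; exists 0; rewrite mul0mx mulmx0 scale0r.
- rewrite mul1mx mulmx1.
  case: (recv_cases y' b') => [[th' ->]|[->|->]].
  + by left; exists 1, th'; rewrite scale1r.
  + by right; exists 1; rewrite scale1r.
  + by right; exists 0; rewrite scale0r.
- case: (recv_cases y' b') => [[th' ->]|[->|->]].
  + by left; exists (cos (th - th') ^+ 2), th; rewrite pp_mul sqr_ge0.
  + by left; exists 1, th; rewrite mulmx1 pp_id scale1r.
  + by right; exists 0; rewrite mulmx0 mul0mx scale0r.
Qed.

Lemma Fq_nice_ge0 al B : nice B -> 0 <= Fq q (projm al) B.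
Proof.
have [q0 q1] := andP Hq.
case=> [[c [th [c0 ->]]]|[c [c0 ->]]]; rewrite FqZr; apply: mulr_ge0 => //.
- rewrite Fq_proj; apply: addr_ge0; last lra.
  apply: mulr_ge0; [lra | exact: sqr_ge0].
- rewrite /Fq S_1 tr_proj tr_1; lra.
Qed.

Lemma pround_ge0 x u bt a s s' : 0 <= pround gamma alpha q x u bt a s s'.
Proof.
have [g0 g1] := andP Hg; have [a0 a1] := andP Ha.
rewrite proundE; apply: mulr_ge0; last exact/Fq_nice_ge0/nice_PMP.
apply: mulr_ge0; [apply: mulr_ge0|].
- lra.
- by case: u => [y|] /=; lra.
- by case: bt => /=; lra.
Qed.

Let K := (1 - 2 * q) / 2 * sin (pi / 8) ^+ 2 + q / 2.

Lemma term_fail x u bt a s :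
  1 / 2 * pU gamma u * pBot alpha bt * Fq q (aliceP R x a) (recvP R (enc_in u) s) * (failp x u a s)%:R
  = pBot alpha bt * (gamma / 4 * K * (failp x u a s)%:R).
Proof.
case: u => [y|]; last by rewrite /= !mulr0n !mulr0.
case hf: (failp x (Some y) a s); last by rewrite !mulr0n !mulr0.
rewrite /= (@fail_val q x y a s hf) /K; field; done.
Qed.

Lemma count_fail : \sum_(x : bool) \sum_(u : option bool) \sum_(a : bool) \sum_(s : bool)
  (failp x u a s)%:R = 8 :> R.
Proof. rewrite !(big_bool, sum_opt) /=; lra. Qed.

Lemma pfail_eq : \sum_(x : bool) \sum_(u : option bool) \sum_(bt : bool) \sum_(a : bool)
  \sum_(s : bool) \sum_(s' : bool) pround gamma alpha q x u bt a s s' * (failp x u a s)%:R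
  = gamma / 4 * K * 8.
Proof.
under eq_bigr => x _ do under eq_bigr => u _ do under eq_bigr => bt _ do
  under eq_bigr => a _ do under eq_bigr => s _ do rewrite -mulr_suml sum_s' term_fail.
under eq_bigr => x _ do under eq_bigr => u _ do under eq_bigr => bt _ do
  under eq_bigr => a _ do rewrite -mulr_sumr.
under eq_bigr => x _ do under eq_bigr => u _ do under eq_bigr => bt _ do rewrite -mulr_sumr.
under eq_bigr => x _ do under eq_bigr => u _ do rewrite -mulr_suml sum_pBot mul1r.
rewrite -count_fail mulr_sumr; apply: eq_bigr => x _; rewrite mulr_sumr; apply: eq_bigr => u _.
rewrite mulr_sumr; apply: eq_bigr => a _; by rewrite mulr_sumr.
Qed.

Lemma pfail_le : gamma / 4 * K * 8 <= gamma * (1 - omega_chsh R) + gamma * q.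
Proof.
have [g0 g1] := andP Hg; have [q0 q1] := andP Hq.
rewrite /K -sin_pi8; have s0 := sqr_ge0 (sin (pi / 8 : R)).
set S8 := sin (pi / 8) ^+ 2 in s0 *.
have : 0 <= gamma * (q * S8) by rewrite mulr_ge0 // mulr_ge0.
lra.
Qed.

End Round.
End Q.

Section Gen.
Variable R : realType.

Lemma sum6 (A1 A2 A3 A4 A5 A6 : finType) (H : A1 -> A2 -> A3 -> A4 -> A5 -> A6 -> R) :
  \sum_x1 \sum_x2 \sum_x3 \sum_x4 \sum_x5 \sum_x6 H x1 x2 x3 x4 x5 x6 =
  \sum_(t : A1 * (A2 * (A3 * (A4 * (A5 * A6))))) H t.1 t.2.1 t.2.2.1 t.2.2.2.1 t.2.2.2.2.1 t.2.2.2.2.2.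
Proof.
under eq_bigr => x1 _ do under eq_bigr => x2 _ do under eq_bigr => x3 _ do
  under eq_bigr => x4 _ do rewrite pair_big /=.
under eq_bigr => x1 _ do under eq_bigr => x2 _ do under eq_bigr => x3 _ do rewrite pair_big /=.
under eq_bigr => x1 _ do under eq_bigr => x2 _ do rewrite pair_big /=.
under eq_bigr => x1 _ do rewrite pair_big /=.
by rewrite pair_big /=.
Qed.

Lemma split6 (I A1 A2 A3 A4 A5 A6 : finType)
  (F : {ffun I -> A1} -> {ffun I -> A2} -> {ffun I -> A3} -> {ffun I -> A4} -> {ffun I -> A5} -> {ffun I -> A6} -> R) :
  \sum_x1 \sum_x2 \sum_x3 \sum_x4 \sum_x5 \sum_x6 F x1 x2 x3 x4 x5 x6 =
  \sum_(z : {ffun I -> A1 * (A2 * (A3 * (A4 * (A5 * A6))))})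
     F [ffun i => (z i).1] [ffun i => (z i).2.1] [ffun i => (z i).2.2.1]
       [ffun i => (z i).2.2.2.1] [ffun i => (z i).2.2.2.2.1] [ffun i => (z i).2.2.2.2.2].
Proof.
rewrite sum6.
pose h (z : {ffun I -> A1 * (A2 * (A3 * (A4 * (A5 * A6))))}) :=
  ([ffun i => (z i).1], ([ffun i => (z i).2.1], ([ffun i => (z i).2.2.1],
   ([ffun i => (z i).2.2.2.1], ([ffun i => (z i).2.2.2.2.1], [ffun i => (z i).2.2.2.2.2]))))).
pose hi (p : {ffun I -> A1} * ({ffun I -> A2} * ({ffun I -> A3} * ({ffun I -> A4} * ({ffun I -> A5} * {ffun I -> A6}))))) :
  {ffun I -> A1 * (A2 * (A3 * (A4 * (A5 * A6))))} :=
  [ffun i => (p.1 i, (p.2.1 i, (p.2.2.1 i, (p.2.2.2.1 i, (p.2.2.2.2.1 i, p.2.2.2.2.2 i)))))].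
rewrite (reindex h) /=; first by [].
exists hi => [z _|p _].
- by apply/ffunP => i; rewrite !ffunE; case: (z i) => ? [? [? [? [? ?]]]].
- case: p => x1 [x2 [x3 [x4 [x5 x6]]]] /=.
  by rewrite /h /hi; congr (_, (_, (_, (_, (_, _))))); apply/ffunP => i; rewrite !ffunE.
Qed.

Lemma prod_eq_indic (I S : finType) (c c0 : {ffun I -> S}) :
  \prod_i ((c0 i == c i)%:R : R) = (c == c0)%:R.
Proof.
case: eqP => [->|/eqP ne].
  by rewrite big1 // => i _; rewrite eqxx.
have [i hi] : exists i, c0 i != c i.
  apply/existsP; apply: contraR ne; rewrite negb_exists => /forallP h.
  by apply/eqP/ffunP => i; have := h i; rewrite negbK => /eqP ->.
by rewrite (bigD1 i) //= (negbTE hi) mul0r.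
Qed.

Lemma pushforward (I T S : finType) (w : T -> R) (g : T -> S) (H : {ffun I -> S} -> R) :
  \sum_(z : {ffun I -> T}) (\prod_i w (z i)) * H [ffun i => g (z i)] =
  \sum_(c : {ffun I -> S}) (\prod_i (\sum_t w t * (g t == c i)%:R)) * H c.
Proof.
have e (z : {ffun I -> T}) (c : {ffun I -> S}) :
    \prod_i (w (z i) * (g (z i) == c i)%:R) = \prod_i w (z i) * (c == [ffun i => g (z i)])%:R.
  rewrite big_split /= -(@prod_eq_indic I S c [ffun i => g (z i)]); congr (_ * _).
  by apply: eq_bigr => i _; rewrite ffunE.
have key (c : {ffun I -> S}) : \prod_i (\sum_t w t * (g t == c i)%:R) =
    \sum_(z : {ffun I -> T}) \prod_i w (z i) * (c == [ffun i => g (z i)])%:R.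
  by rewrite bigA_distr_bigA; apply: eq_bigr => z _; rewrite -e.
under [RHS]eq_bigr => c _ do rewrite key mulr_suml.
rewrite exchange_big /=; apply: eq_bigr => z _.
rewrite (bigD1 [ffun i => g (z i)]) //= eqxx mulr1.
rewrite [X in _ + X]big1 ?addr0 //.
by move=> c /negbTE ->; rewrite mulr0 mul0r.
Qed.

Lemma prod_sum (I T : finType) (w : T -> R) :
  \sum_(z : {ffun I -> T}) \prod_i w (z i) = (\sum_t w t) ^+ #|I|.
Proof.
transitivity (\prod_(i : I) \sum_t w t); last by rewrite prodr_const.
by rewrite [RHS]bigA_distr_bigA.
Qed.

End Gen.


Section Main.
Variables (R : realType) (l : nat) (gamma alpha delta q : R).
Variables (Syn : Type) (syn : bits l -> Syn)
  (guess : {ffun 'I_l -> bool * option bool * option bool} -> Syn -> bits l).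

Definition corr (x u bt a s' : _) : bool :=
  let Xt := [ffun i => xtil1 (x i) (bt i)] in
  let At := [ffun i => atil1 (u i) (bt i) (a i)] in
  let St := [ffun i => atil1 (u i) (bt i) (s' i)] in
  guess [ffun i => (St i, u i, Xt i)] (syn At) == At.

Lemma run_ok (m x : bits l) (u : {ffun 'I_l -> option bool}) (bt a s s' r cd : bits l) :
  (let o := run gamma delta syn guess m x u bt a s s' r cd in o.1 && (o.2 == m)) =
  accepts gamma delta x u a s && corr x u bt a s'.
Proof.
rewrite /run /corr /=; case: (accepts _ _ _ _ _ _) => //=.
set Ah := guess _ _; set At := [ffun i => _].
apply/eqP/eqP => [h|->]; apply/ffunP => i.
- have := congr1 (fun f : bits l => f i) h; rewrite /xor_bits !ffunE.
  by move: (m i) (r i) (atil1 (u i) (bt i) (a i)) (Ah i) => [] [] [] [].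
- by rewrite /xor_bits !ffunE; move: (m i) (r i) (atil1 (u i) (bt i) (a i)) => [] [] [].
Qed.


Lemma card_bits : #|{: bits l}| = (2 ^ l)%N.
Proof. by rewrite card_ffun card_bool card_ord. Qed.

Lemma inner (m x : bits l) (u : {ffun 'I_l -> option bool}) (bt a s s' : bits l) (P : R) :
  \sum_(r : bits l) \sum_(cd : bits l) P * (2 ^+ l)^-1 * (2 ^+ l)^-1 *
    (let o := run gamma delta syn guess m x u bt a s s' r cd in o.1 && (o.2 == m))%:R =
  P * (accepts gamma delta x u a s && corr x u bt a s')%:R.
Proof.
rewrite (eq_bigr (fun r => \sum_(cd : bits l) P * (2 ^+ l)^-1 * (2 ^+ l)^-1 *
   (accepts gamma delta x u a s && corr x u bt a s')%:R)); last first.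
  move=> r _; apply: eq_bigr => cd _; by rewrite -(run_ok m x u bt a s s' r cd).
rewrite !sumr_const card_bits -mulrnA -[X in X = _]mulr_natr natrM natrX.
have h : (2 : R) ^+ l != 0 by rewrite expf_neq0 // pnatr_eq0.
by field.
Qed.

Definition T6 := (bool * (option bool * (bool * (bool * (bool * bool)))))%type.
Definition w (t : T6) : R := pround gamma alpha q t.1 t.2.1 t.2.2.1 t.2.2.2.1 t.2.2.2.2.1 t.2.2.2.2.2.
Definition c1 (z : {ffun 'I_l -> T6}) : bits l := [ffun i => (z i).1].
Definition c2 (z : {ffun 'I_l -> T6}) : {ffun 'I_l -> option bool} := [ffun i => (z i).2.1].
Definition c3 (z : {ffun 'I_l -> T6}) : bits l := [ffun i => (z i).2.2.1].
Definition c4 (z : {ffun 'I_l -> T6}) : bits l := [ffun i => (z i).2.2.2.1].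
Definition c5 (z : {ffun 'I_l -> T6}) : bits l := [ffun i => (z i).2.2.2.2.1].
Definition c6 (z : {ffun 'I_l -> T6}) : bits l := [ffun i => (z i).2.2.2.2.2].

Lemma success_eq m : success_prob gamma alpha q delta syn guess m =
  \sum_(z : {ffun 'I_l -> T6}) (\prod_i w (z i)) *
    (accepts gamma delta (c1 z) (c2 z) (c4 z) (c5 z) && corr (c1 z) (c2 z) (c3 z) (c4 z) (c6 z))%:R.
Proof.
rewrite /success_prob.
under eq_bigr => x _ do under eq_bigr => u _ do under eq_bigr => bt _ do
  under eq_bigr => a _ do under eq_bigr => s _ do under eq_bigr => s' _ do rewrite inner.
rewrite (@split6 R _ _ _ _ _ _ _ (fun (x : bits l) (u : {ffun 'I_l -> option bool}) (bt a s s' : bits l) =>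
  (\prod_(i < l) pround gamma alpha q (x i) (u i) (bt i) (a i) (s i) (s' i)) *
  (accepts gamma delta x u a s && corr x u bt a s')%:R)).
apply: eq_bigr => z _; congr (_ * _).
by apply: eq_bigr => i _; rewrite !ffunE.
Qed.


Hypotheses (Hg : 0 <= gamma <= 1) (Ha : 0 <= alpha <= 1) (Hq : 0 <= q <= 1 / 2).

Lemma total_w : \sum_(t : T6) w t = 1.
Proof.
rewrite /w -(@sum6 R _ _ _ _ _ _ (pround gamma alpha q)).
exact: total_round.
Qed.

Lemma w_ge0 t : 0 <= w t.
Proof. exact: pround_ge0. Qed.

Lemma W_ge0 (z : {ffun 'I_l -> T6}) : 0 <= \prod_i w (z i).
Proof. by apply: prodr_ge0 => i _; exact: w_ge0. Qed.

Lemma sumW : \sum_(z : {ffun 'I_l -> T6}) \prod_i w (z i) = 1.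
Proof. by rewrite (@prod_sum R) total_w expr1n. Qed.

Definition g (t : T6) : bool * (bool * option bool * option bool) :=
  (atil1 t.2.1 t.2.2.1 t.2.2.2.1, (atil1 t.2.1 t.2.2.1 t.2.2.2.2.2, t.2.1, xtil1 t.1 t.2.2.1)).

Lemma pCC_eq c : pCC gamma alpha q c = \sum_(t : T6) w t * (g t == c)%:R.
Proof.
by rewrite /pCC (@sum6 R _ _ _ _ _ _ (fun x u bt a s s' =>
  pround gamma alpha q x u bt a s s' *
  ((atil1 u bt a, (atil1 u bt s', u, xtil1 x bt)) == c)%:R)).
Qed.

Lemma wrong_eq : \sum_(z : {ffun 'I_l -> T6}) (\prod_i w (z i)) *
   (~~ corr (c1 z) (c2 z) (c3 z) (c4 z) (c6 z))%:R = ec_error gamma alpha q syn guess.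
Proof.
rewrite /ec_error.
under [RHS]eq_bigr => cc _ do under eq_bigr => i _ do rewrite pCC_eq.
rewrite -(@pushforward R _ _ _ w g (fun cc => (guess [ffun i => (cc i).2] (syn [ffun i => (cc i).1])
   != [ffun i => (cc i).1])%:R)).
apply: eq_bigr => z _; congr (_ * _%:R).
have E1 : [ffun i => ([ffun i => g (z i)] i).1] = [ffun i => atil1 (c2 z i) (c3 z i) (c4 z i)].
  by apply/ffunP => i; rewrite !ffunE.
have E2 : [ffun i => ([ffun i => g (z i)] i).2] = [ffun i => ([ffun i => atil1 (c2 z i) (c3 z i) (c6 z i)] i,
     c2 z i, [ffun i => xtil1 (c1 z i) (c3 z i)] i)].
  by apply/ffunP => i; rewrite !ffunE.
by rewrite E1 E2 /corr.
Qed.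

Definition f (t : T6) : bool := failp t.1 t.2.1 t.2.2.2.1 t.2.2.2.2.1.

Lemma nfail_sum z : ((nfail (c1 z) (c2 z) (c4 z) (c5 z))%:R : R) = \sum_i ((f (z i))%:R : R).
Proof.
rewrite /nfail -sum1_card natr_sum big_mkcond /=; apply: eq_bigr => i _.
rewrite inE /c1 /c2 /c4 /c5 /f /failp !ffunE; case: (z i).2.1 => [y|] //.
by case: (_ != _).
Qed.

Definition p := \sum_(t : T6) w t * (f t)%:R.

Lemma p_eq : p = gamma / 4 * ((1 - 2 * q) / 2 * sin (pi / 8) ^+ 2 + q / 2) * 8.
Proof.
rewrite /p /w /f -(@pfail_eq R gamma alpha q).
by rewrite (@sum6 R _ _ _ _ _ _ (fun x u bt a s s' =>
  pround gamma alpha q x u bt a s s' * (failp x u a s)%:R)).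
Qed.

Lemma p_le : p <= gamma * (1 - omega_chsh R) + gamma * q.
Proof. by rewrite p_eq; apply: pfail_le. Qed.

Lemma p_ge0 : 0 <= p.
Proof. by apply: sumr_ge0 => t _; apply: mulr_ge0 (w_ge0 t) (ler0n _ _). Qed.

Lemma omega_ge : 1 / 2 <= omega_chsh R.
Proof.
rewrite /omega_chsh; have : 0 <= (Num.sqrt (2 : R))^-1 by rewrite invr_ge0 sqrtr_ge0.
lra.
Qed.

Lemma omega_le1 : omega_chsh R <= 1.
Proof.
have s1 : 1 <= Num.sqrt (2:R) by rewrite -[X in X <= _]sqrtr1 ler_sqrt // ler1n.
have : (Num.sqrt (2 : R))^-1 <= 1 by rewrite invf_le1 // (lt_le_trans ltr01 s1).
rewrite /omega_chsh; lra.
Qed.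

Lemma p_le1 : p <= 1.
Proof.
have := p_le; have := omega_ge; have := omega_le1; have [g0 g1] := andP Hg; have [q0 q1] := andP Hq.
have : gamma * q <= q by rewrite ler_piMl.
have : gamma * (1 - omega_chsh R) <= 1 - omega_chsh R.
  by rewrite ler_piMl // subr_ge0 omega_le1.
lra.
Qed.


Hypotheses (Hd : 0 < delta) (Hqd : q < delta / 4).

Lemma indic_le_exp (N C : R) : ((~~ (N <= C))%:R : R) <= expR (delta * (N - C)).
Proof.
case: (leP N C) => h /=; first by rewrite mulr0n expR_ge0.
rewrite mulr1n.
apply: le_trans (expR_ge1Dx _).
have : 0 < delta * (N - C) by rewrite mulr_gt0 // subr_gt0.
lra.
Qed.

Lemma rej_bound : \sum_(z : {ffun 'I_l -> T6}) (\prod_i w (z i)) *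
   (~~ accepts gamma delta (c1 z) (c2 z) (c4 z) (c5 z))%:R <= expR (- (delta ^+ 2 * l%:R / 8)).
Proof.
set C := (gamma * (1 - omega_chsh R) + delta / 2) * l%:R.
apply: (@le_trans _ _ (\sum_(z : {ffun 'I_l -> T6}) (\prod_i w (z i)) *
   expR (delta * (\sum_i ((f (z i))%:R : R) - C)))).
  apply: ler_sum => z _; apply: ler_wpM2l; first exact: W_ge0.
  rewrite /accepts nfail_sum; exact: indic_le_exp.
have E (z : {ffun 'I_l -> T6}) : (\prod_i w (z i)) * expR (delta * (\sum_i ((f (z i))%:R : R) - C)) =
   expR (- (delta * C)) * \prod_i (w (z i) * expR (delta * (f (z i))%:R)).
  rewrite mulrBr mulr_sumr addrC expRD expR_sum [in RHS]big_split /=.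
  by rewrite mulrCA.
under eq_bigr => z _ do rewrite E.
rewrite -mulr_sumr (@prod_sum R _ _ (fun t => w t * expR (delta * (f t)%:R))) card_ord.
have B : \sum_(t : T6) w t * expR (delta * (f t)%:R) = 1 - p + p * expR delta.
  have e t : w t * expR (delta * (f t)%:R) = w t + (expR delta - 1) * (w t * (f t)%:R).
    by case: (f t) => /=; rewrite ?mulr1 ?mulr0 ?expR0; ring.
  under eq_bigr => t _ do rewrite e.
  rewrite big_split /= -mulr_sumr total_w -/p; ring.
rewrite B.
have H := @hoeffding R p p_ge0 p_le1 delta (ltW Hd).
have b0 : 0 <= 1 - p + p * expR delta.
  have := p_le1; have := mulr_ge0 p_ge0 (expR_ge0 delta); lra.
have H2 : (1 - p + p * expR delta) ^+ l <= expR (p * delta + delta ^+ 2 / 8) ^+ l.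
  by apply: lerXn2r; rewrite ?nnegrE // expR_ge0.
rewrite -expRM_natl in H2.
apply: le_trans (ler_wpM2l (expR_ge0 _) H2) _.
rewrite -expRD ler_expR.
have h1 : p - gamma * (1 - omega_chsh R) - delta / 4 <= 0.
  have := p_le; have [g0 g1] := andP Hg; have [q0 q1] := andP Hq.
  have : gamma * q <= q by rewrite ler_piMl.
  move=> u1 u2; have u3 := Hqd; set X := gamma * (1 - omega_chsh R) in u2 *; move: u1 u2 u3; set Y := gamma * q; set Z := delta / 4; set P := p; lra.
have h2 : 0 <= delta * l%:R by rewrite mulr_ge0 // ltW.
have key : - (delta * C) + l%:R * (p * delta + delta ^+ 2 / 8) - (- (delta ^+ 2 * l%:R / 8))
   = delta * l%:R * (p - gamma * (1 - omega_chsh R) - delta / 4).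
  by rewrite /C; field.
by rewrite -subr_le0 key; apply: mulr_ge0_le0.
Qed.

Lemma final m : 1 - (expR (- (delta ^+ 2 * l%:R / 8)) + ec_error gamma alpha q syn guess)
  <= success_prob gamma alpha q delta syn guess m.
Proof.
rewrite success_eq.
set W := fun z : {ffun 'I_l -> T6} => \prod_i w (z i).
set A := fun z : {ffun 'I_l -> T6} => accepts gamma delta (c1 z) (c2 z) (c4 z) (c5 z).
set Co := fun z : {ffun 'I_l -> T6} => corr (c1 z) (c2 z) (c3 z) (c4 z) (c6 z).
have low z : W z - W z * (~~ A z)%:R - W z * (~~ Co z)%:R <= W z * (A z && Co z)%:R.
  have := W_ge0 z; rewrite -/(W z).
  by case: (A z); case: (Co z) => /=; rewrite ?mulr0 ?mulr1 ?subr0 => h; lra.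
apply: le_trans (ler_sum _ (fun z _ => low z)).
rewrite !sumrB sumW wrong_eq.
have := rej_bound; lra.
Qed.

End Main.

Theorem theorem23 (R : realType) (lam : nat)
  (gamma alpha xi delta kappa q : R)
  (Hgamma : 0 < gamma < 1) (Halpha : 0 < alpha < 1) (Hxi : 1 < xi)
  (Hdelta : 0 < delta) (Hkappa : 0 < kappa)
  (Hq : 0 <= q <= 1 / 2) (Hqdelta : q < delta / 4)
  (Hsyn : 2 * xi * (1 - gamma) * (1 - alpha) * h2 q
          < kappa * delta ^+ 3 * alpha ^+ 4)
  (p_err : nat -> R)
  (Syn : Type) (syn : bits lam -> Syn)
  (guess : {ffun 'I_lam -> bool * option bool * option bool} -> Syn -> bits lam)
  (Hec : ec_error gamma alpha q syn guess <= p_err lam)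
  (m : bits lam) :
  success_prob gamma alpha q delta syn guess m
    >= 1 - (expR (- (delta ^+ 2 * lam%:R / 8)) + p_err lam).
Proof.
have Hg : 0 <= gamma <= 1 by case/andP: Hgamma => h1 h2; rewrite (ltW h1) (ltW h2).
have Ha : 0 <= alpha <= 1 by case/andP: Halpha => h1 h2; rewrite (ltW h1) (ltW h2).
have := @final R lam gamma alpha delta q Syn syn guess Hg Ha Hq Hdelta Hqdelta m.
move=> h; apply: le_trans h; lra.
Qed.
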